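(* Let $k\ge 1$, let $a_0,\dots,a_{k-1}\in\mathbb{Q}$ with $a_0\neq 0$, and let $u:\mathbb{N}_0\to\mathbb{Q}$ be the linear recurrence sequence with given initial values $u(0),\dots,u(k-1)\in\mathbb{Q}$ and $u(n+k)=\sum_{i=0}^{k-1}a_i\,u(n+i)$ for all $n\ge 0$. Define sequences $x_0,\dots,x_{k-1}:\mathbb{N}_0\to\mathbb{Q}$ by the initial values $$x_0(0)=u(0),\qquad x_i(0)=u(i)\cdot\prod_{\ell=0}^{i-1}x_\ell(0)\quad(1\le i<k),$$ and the recurrences, for all $n\ge 0$, $$x_i(n+1)=x_{i+1}(n)\quad(0\le i<k-1),\qquad x_{k-1}(n+1)=\sum_{i=0}^{k-1}a_i\,x_i(n)\prod_{\ell=i}^{k-1}x_\ell(n).$$ Define sequences $s_0,\dots,s_{k-1}:\mathbb{N}_0\to\mathbb{Q}$ by $s_0(0)=1$, $s_i(0)=\prod_{\ell=0}^{i-1}x_\ell(0)$ for $1\le i<k$, and for all $n\ge0$: $s_i(n+1)=s_{i+1}(n)$ for $0\le i<k-1$ and $s_{k-1}(n+1)=s_{k-1}(n)\cdot x_{k-1}(n)$. Then for all $n\ge 0$ and all $0\le i<k$, $$x_i(n)=s_i(n)\cdot u(n+i)\qquad\text{and}\qquad s_i(n)=\prod_{\ell=0}^{n-1}x_0(\ell)\cdot\prod_{\ell=0}^{i-1}x_\ell(n),$$ where empty products equal $1$. *)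

(* Defs.v *)
(* Sequences are functions nat -> rat; the family
   x_0..x_{k-1} is encoded as x : nat -> nat -> rat with x i n = x_i(n). *)
From mathcomp Require Import all_boot all_order all_algebra.

(* Main.v *)
Require Import Defs.
From mathcomp Require Import all_boot all_order all_algebra.
From mathcomp Require Import ring.
Import GRing.Theory Num.Theory.
Local Open Scope ring_scope.

Theorem lemma3p2 (k : nat) (a u : nat -> rat) (x s : nat -> nat -> rat) :
  (1 <= k)%N -> a 0%N != 0 ->
  (forall n, u (n + k)%N = \sum_(i < k) a i * u (n + i)%N) ->
  x 0%N 0%N = u 0%N ->
  (forall i, (1 <= i < k)%N -> x i 0%N = u i * \prod_(l < i) x l 0%N) ->
  (forall n i, (i < k.-1)%N -> x i n.+1 = x i.+1 n) ->
  (forall n, x k.-1 n.+1 = \sum_(i < k) a i * x i n * \prod_(i <= l < k) x l n) ->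
  s 0%N 0%N = 1 ->
  (forall i, (1 <= i < k)%N -> s i 0%N = \prod_(l < i) x l 0%N) ->
  (forall n i, (i < k.-1)%N -> s i n.+1 = s i.+1 n) ->
  (forall n, s k.-1 n.+1 = s k.-1 n * x k.-1 n) ->
  forall n i, (i < k)%N ->
    x i n = s i n * u (n + i)%N /\
    s i n = (\prod_(l < n) x 0%N l) * \prod_(l < i) x l n.
Proof.
case: k => [//|K] _ _ hu hx00 hx0 hxS hxK hs00 hs0 hsS hsK.
have hxK' : forall n, x K n.+1 = \sum_(i < K.+1) a i * x i n * \prod_(i <= l < K.+1) x l n by exact: hxK.
have hsK' : forall n, s K n.+1 = s K n * x K n by exact: hsK.
have hxS' : forall n i, (i < K)%N -> x i n.+1 = x i.+1 n by exact: hxS.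
have hsS' : forall n i, (i < K)%N -> s i n.+1 = s i.+1 n by exact: hsS.
clear hxK hsK hxS hsS.
have shift : forall n i, (i <= K)%N ->
    \prod_(l < i) x l n.+1 = \prod_(l < i) x l.+1 n.
  move=> n i hi; apply: eq_bigr => l _; apply: hxS'.
  exact: leq_trans (ltn_ord l) hi.
have recl : forall n i, \prod_(l < i.+1) x l n = x 0%N n * \prod_(l < i) x l.+1 n.
  by move=> n i; rewrite big_ord_recl.
elim=> [|n IH] i ik.
  case: i ik => [|i] ik.
    by rewrite hx00 hs00 !big_ord0 mulr1 mul1r.
  by rewrite hx0 // hs0 // big_ord0 mul1r mulrC.
have hsn : forall i, (i < K.+1)%N ->
    s i n.+1 = (\prod_(l < n.+1) x 0%N l) * \prod_(l < i) x l n.+1.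
  move=> j jk; rewrite big_ord_recr /= shift //. rewrite -mulrA -(recl n j).
  have [jK|] := ltnP j K.
    by rewrite hsS' // (IH j.+1 _).2.
  move=> Kj; have -> : j = K by apply/eqP; rewrite eqn_leq Kj andbT -ltnS.
  by rewrite hsK' (IH K _).2 // big_ord_recr /= mulrA.
split; last exact: hsn.
have [iK|] := ltnP i K.
  by rewrite hxS' // hsS' // (IH i.+1 _).1 // addnS addSn.
move=> Ki; have -> : i = K by apply/eqP; rewrite eqn_leq Ki andbT -ltnS.
rewrite hxK' hsn // [\prod_(l < n.+1) _]big_ord_recr /= shift // -(mulrA _ (x 0%N n)) -recl.
set Q := \prod_(l < K.+1) x l n.
rewrite addSnnS hu mulr_sumr; apply: eq_bigr => j _.
rewrite (IH j _).1 // (IH j _).2 //.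
have -> : \prod_(j <= l < K.+1) x l n = \prod_(j <= l < K.+1) x l n by [].
have hQ : Q = \prod_(l < j) x l n * \prod_(j <= l < K.+1) x l n.
  rewrite /Q -!(big_mkord xpredT (fun l => x l n)) (@big_cat_nat _ _ _ j 0%N K.+1) //.
  exact: ltnW (ltn_ord j).
rewrite hQ; ring.
Qed.
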